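(* Let $R$ be a ring such that every ideal generated by a strong parameter sequence on $R$ is unmixed. Then $R$ is Cohen-Macaulay.
   Context: All rings are commutative with identity. For an $R$-module $M$, a prime $P$ is weakly associated to $M$ if $P$ is minimal over $(0:_Rz)$ for some $z\in M$; $\operatorname{wAss}_R M$ is the set of such primes, and $\operatorname{Min}_R M$ denotes the set of minimal primes of the support of $M$. An ideal $I$ is unmixed if $\operatorname{wAss}_R R/I=\operatorname{Min}_R R/I$. For $x\in R$ let $C(x)$ be the complex $0\to R\to R_x\to 0$ ($R$ in degree $0$, natural localization map); for a finite sequence $\mathbf x=x_1,\dots,x_\ell$ put $C(\mathbf x)=C(x_1)\otimes_R\cdots\otimes_R C(x_\ell)$ and let $H^i_{\mathbf x}(M)$ be the $i$th cohomology of $C(\mathbf x)\otimes_R M$; $\ell(\mathbf x)=\ell$. Let $K(x)$ be $0\to R\xrightarrow{x}R\to 0$ (degrees $1,0$), $K(\mathbf x)=K(x_1)\otimes\cdots\otimes K(x_\ell)$, $H_i(\mathbf x)$ its homology. For $m\ge n$ the chain map $K(\mathbf x^m)\to K(\mathbf x^n)$ ($\mathbf x^m=x_1^m,\dots,x_\ell^m$) is the tensor product of the maps $K(x_i^m)\to K(x_i^n)$ given by multiplication by $x_i^{m-n}$ in degree $1$ and identity in degree $0$. $\mathbf x$ is weakly proregular if for every $n$ there is $m\ge n$ with $H_i(\mathbf x^m)\to H_i(\mathbf x^n)$ zero for all $i\ge1$. $\mathbf x$ is a parameter sequence on $R$ if it is weakly proregular, $(\mathbf x)R\neq R$, and $H^{\ell(\mathbf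 x)}_{\mathbf x}(R)_p\neq0$ for every prime $p\supseteq(\mathbf x)R$ (the empty sequence, generating the zero ideal, is a parameter sequence). It is a strong parameter sequence if $x_1,\dots,x_i$ is a parameter sequence for each $i=1,\dots,\ell(\mathbf x)$. A regular sequence on $M$: each $x_i$ is a non-zero-divisor on $M/(x_1,\dots,x_{i-1})M$ and $M\neq(\mathbf x)M$. A ring $R$ is Cohen-Macaulay if every strong parameter sequence on $R$ is a regular sequence on $R$. *)

(* Defs.v *)
From HB Require Import structures.
From mathcomp Require Import all_boot all_order all_algebra.
Set Implicit Arguments. Unset Strict Implicit. Unset Printing Implicit Defensive.
Import GRing.Theory.
Local Open Scope ring_scope.

Section CohenMacaulay.
Variable R : comNzRingType.

Definition subI (I J : R -> Prop) : Prop := forall r, I r -> J r.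

Definition is_ideal (I : R -> Prop) : Prop :=
  I 0 /\ (forall a b, I a -> I b -> I (a + b)) /\ (forall r a, I a -> I (r * a)).

Definition prime_ideal (P : R -> Prop) : Prop :=
  is_ideal P /\ ~ P 1 /\ (forall a b, P (a * b) -> P a \/ P b).

Definition ideal_gen (s : seq R) (r : R) : Prop :=
  exists c : 'I_(size s) -> R, r = \sum_(j < size s) c j * s`_j.

Definition minimal_prime_over (J P : R -> Prop) : Prop :=
  [/\ prime_ideal P, subI J P &
      forall Q, prime_ideal Q -> subI J Q -> subI Q P -> subI P Q].

(* (0 :_R z) for z = class of r in R/I, i.e. {a | a r \in I} *)
Definition ann_quot (I : R -> Prop) (r : R) : R -> Prop := fun a => I (a * r).

Definition wAss_quot (I P : R -> Prop) : Prop :=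
  exists r : R, minimal_prime_over (ann_quot I r) P.

(* P \in Supp_R (R/I): (R/I)_P <> 0, i.e. some r/1 is nonzero in (R/I)_P *)
Definition supp_quot (I P : R -> Prop) : Prop :=
  prime_ideal P /\ exists r : R, forall t, ~ P t -> ~ I (t * r).

Definition Min_quot (I P : R -> Prop) : Prop :=
  supp_quot I P /\ (forall Q, supp_quot I Q -> subI Q P -> subI P Q).

Definition unmixed (I : R -> Prop) : Prop :=
  forall P : R -> Prop, wAss_quot I P <-> Min_quot I P.

(* ---------- Koszul complex K(x), x : 'I_l -> R ----------
   K(x)_i is free on the e_S, S a subset of {0..l-1} with #|S| = i;
   a chain is f : {set 'I_l} -> R (coefficient of e_S), of degree i if
   supported on sets of cardinality i.
   d(e_S) = sum_(j in S) (-1)^#{k in S | k < j} x_j e_(S \ j). *)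
Definition kdeg (l : nat) (i : nat) (f : {set 'I_l} -> R) : Prop :=
  forall S : {set 'I_l}, #|S| != i -> f S = 0.

Definition koszul_d (l : nat) (x : 'I_l -> R) (f : {set 'I_l} -> R)
  : {set 'I_l} -> R :=
  fun T => \sum_(j < l | j \notin T)
             (-1) ^+ #|[set k in T | (k < j)%N]| * x j * f (j |: T).

Definition xpow (l : nat) (x : 'I_l -> R) (m : nat) : 'I_l -> R :=
  fun j => x j ^+ m.

(* the chain map K(x^m) -> K(x^n): e_S |-> (prod_(j in S) x_j^(m-n)) e_S *)
Definition koszul_map (l : nat) (x : 'I_l -> R) (e : nat)
  (f : {set 'I_l} -> R) : {set 'I_l} -> R :=
  fun S => (\prod_(j in S) x j ^+ e) * f S.

(* the induced map H_i(x^m) -> H_i(x^n) is zero *)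
Definition koszul_H_map_zero (l : nat) (x : 'I_l -> R) (m n i : nat) : Prop :=
  forall z : {set 'I_l} -> R,
    kdeg i z -> (forall T, koszul_d (xpow x m) z T = 0) ->
    exists w : {set 'I_l} -> R,
      kdeg i.+1 w /\
      (forall T, koszul_d (xpow x n) w T = koszul_map x (m - n) z T).

Definition seqfun (s : seq R) : 'I_(size s) -> R := fun j => s`_j.
Arguments seqfun : clear implicits.

Definition weakly_proregular (s : seq R) : Prop :=
  forall n : nat, exists2 m : nat, (n <= m)%N &
    forall i : nat, (0 < i)%N -> koszul_H_map_zero (seqfun s) m n i.

(* ---------- top Cech cohomology H^l_x(R) ----------
   With y = x_1 ... x_l, H^l_x(R) = R_y / sum_i im(R_{y/x_i} -> R_y).
   An element of R_y is a/y^k; a/y^k = b/y^j in R_y iff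
   y^N (a y^j - b y^k) = 0 for some N. The image of b_i/(y/x_i)^t in R_y
   is b_i x_i^t / y^t; a finite sum of such is taken over a common t. *)
Definition loc_eq (y a : R) (k : nat) (b : R) (j : nat) : Prop :=
  exists N : nat, y ^+ N * (a * y ^+ j - b * y ^+ k) = 0.

(* the class of a/y^k in H^l_x(R) is zero *)
Definition cech_top_zero (l : nat) (x : 'I_l -> R) (a : R) (k : nat) : Prop :=
  exists (t : nat) (b : 'I_l -> R),
    loc_eq (\prod_(j < l) x j) a k (\sum_(j < l) b j * x j ^+ t) t.

(* H^l_x(R)_P <> 0 : some element eta has t * eta <> 0 for all t \notin P *)
Definition cech_top_loc_nonzero (l : nat) (x : 'I_l -> R) (P : R -> Prop) : Prop :=
  exists (a : R) (k : nat), forall t, ~ P t -> ~ cech_top_zero x (t * a) k.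

Definition parameter_seq (s : seq R) : Prop :=
  [/\ weakly_proregular s, ~ ideal_gen s 1 &
      forall P, prime_ideal P -> subI (ideal_gen s) P ->
        cech_top_loc_nonzero (seqfun s) P].

Definition strong_parameter_seq (s : seq R) : Prop :=
  forall i : nat, (0 < i <= size s)%N -> parameter_seq (take i s).

Definition regular_seq (s : seq R) : Prop :=
  (forall i : nat, (i < size s)%N -> forall r : R,
     ideal_gen (take i s) (r * s`_i) -> ideal_gen (take i s) r)
  /\ ~ ideal_gen s 1.

Definition cohen_macaulay : Prop :=
  forall s : seq R, strong_parameter_seq s -> regular_seq s.

End CohenMacaulay.

(* Main.v *)
Require Import Defs.
From mathcomp Require Import all_boot all_order all_algebra ring.
From mathcomp Require boolp classical_sets.
From Stdlib Require Import Classical.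
Set Implicit Arguments. Unset Strict Implicit. Unset Printing Implicit Defensive.
Import GRing.Theory.
Local Open Scope ring_scope.

Lemma zorn_gen (U : Type) (le : U -> U -> Prop) (Q : U -> Prop) (u0 : U) :
  (forall u, le u u) -> (forall u v w, le u v -> le v w -> le u w) ->
  Q u0 ->
  (forall C : U -> Prop, (forall X, C X -> Q X) ->
     (forall X Y, C X -> C Y -> le X Y \/ le Y X) -> (exists X, C X) ->
     exists2 B, Q B & forall X, C X -> le X B) ->
  exists M, [/\ Q M, le u0 M & forall N, Q N -> le M N -> le N M].
Proof.
move=> refl trans Q0 chain.
pose T := {u : U | Q u /\ le u0 u}.
have t0 : T by exists u0; split.
pose Rl := fun a b : T => boolp.asbool (le (sval a) (sval b)).
have [] := @classical_sets.ZL_preorder T t0 Rl.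
- by move=> t; apply/boolp.asboolP.
- by move=> r s t /boolp.asboolP h1 /boolp.asboolP h2; apply/boolp.asboolP; apply: trans h2.
- move=> A Atot.
  case: (classic (exists a, A a)) => [[a Aa]|nA]; last first.
    by exists t0 => s As; case: nA; exists s.
  have [B QB HB] : exists2 B, Q B & forall X, (exists a, A a /\ sval a = X) -> le X B.
    apply: chain.
  + by move=> X [b [_ <-]]; case: (svalP b).
  + move=> X Y [b [Ab <-]] [c [Ac <-]].
    by case: (Atot b c Ab Ac) => /boolp.asboolP; [left|right].
  + by exists (sval a); exists a.
  have u0B : le u0 B.
    apply: (trans _ (sval a)); first by case: (svalP a).
    by apply: HB; exists a.
  exists (exist _ B (conj QB u0B)) => s As; apply/boolp.asboolP => /=.
  by apply: HB; exists s.
- move=> M HM; exists (sval M); case: (svalP M) => QM u0M; split => //.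
  move=> N QN MN.
  have u0N : le u0 N by apply: trans MN.
  have := HM (exist _ N (conj QN u0N)).
  by move=> /(_ (introT (boolp.asboolP _) MN)) /boolp.asboolP.
Qed.

Lemma ideal_sum (R : comNzRingType) (K : R -> Prop) (I : Type) (r : seq I) (P : pred I) (F : I -> R) :
  is_ideal K -> (forall j, P j -> K (F j)) -> K (\sum_(j <- r | P j) F j).
Proof.
move=> [K0 [KD KM]] HF; apply: (big_ind K) => //.
Qed.

Lemma ideal_muln (R : comNzRingType) (K : R -> Prop) a n :
  is_ideal K -> K a -> K (a *+ n).
Proof.
move=> [K0 [KD KM]] Ka; elim: n => [|n IH]; first by rewrite mulr0n.
by rewrite mulrS; apply: KD.
Qed.

Lemma ideal_mulr (R : comNzRingType) (K : R -> Prop) a b :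
  is_ideal K -> K a -> K (a * b).
Proof. by move=> [K0 [KD KM]] Ka; rewrite mulrC; apply: KM. Qed.

Lemma ideal_gen_ideal (R : comNzRingType) (s : seq R) : is_ideal (ideal_gen s).
Proof.
split; first by exists (fun _ => 0); rewrite big1 // => j _; rewrite mul0r.
split.
  move=> a b [c ->] [d ->]; exists (fun j => c j + d j).
  by rewrite -big_split /=; apply: eq_bigr => j _; rewrite mulrDl.
move=> r a [c ->]; exists (fun j => r * c j).
by rewrite mulr_sumr; apply: eq_bigr => j _; rewrite mulrA.
Qed.

Lemma ideal_gen_sub (R : comNzRingType) (s : seq R) (P : R -> Prop) :
  is_ideal P -> (forall j, (j < size s)%N -> P s`_j) -> subI (ideal_gen s) P.
Proof.
move=> HP Hg r [c ->]; apply: ideal_sum => // j _.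
case: HP => [_ [_ KM]]; apply: KM; apply: Hg; exact: ltn_ord.
Qed.

Lemma ideal_gen_mem (R : comNzRingType) (s : seq R) j :
  (j < size s)%N -> ideal_gen s s`_j.
Proof.
move=> hj; exists (fun k => if val k == j then 1 else 0).
rewrite (bigD1 (Ordinal hj)) //= eqxx mul1r big1 ?addr0 // => k /negP nk.
case: eqP => [ek|_]; last by rewrite mul0r.
by case: nk; apply/eqP/val_inj.
Qed.

Lemma ideal_gen_nat (R : comNzRingType) (s : seq R) v :
  ideal_gen s v -> exists c : nat -> R, v = \sum_(j < size s) c j * s`_j.
Proof.
move=> [c ->]; exists (fun n => if insub n is Some k then c k else 0).
by apply: eq_bigr => j _; rewrite valK.
Qed.

Lemma binom_ideal (R : comNzRingType) (K : R -> Prop) u v a b :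
  is_ideal K -> K (u ^+ a) -> K (v ^+ b) -> K ((u + v) ^+ (a + b)).
Proof.
move=> HK Ku Kv; rewrite exprDn; apply: ideal_sum => // j _.
apply: ideal_muln => //.
have hj := ltn_ord j.
case: (leqP b j) => hbj.
  have -> : v ^+ j = v ^+ (j - b) * v ^+ b by rewrite -exprD subnK.
  by rewrite mulrA; case: HK => [_ [_ KM]]; apply: KM.
have hT : (a <= a + b - j)%N by rewrite -addnBA ?leq_addr // ltnW.
have -> : u ^+ (a + b - j) = u ^+ (a + b - j - a) * u ^+ a by rewrite -exprD subnK.
by rewrite -mulrA mulrC; apply: ideal_mulr => //; apply: ideal_mulr.
Qed.

Lemma sum_pow_ideal (R : comNzRingType) (K : R -> Prop) T n (F : 'I_n -> R) :
  is_ideal K -> (forall j, K (F j ^+ T)) -> K ((\sum_(j < n) F j) ^+ (n * T).+1).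
Proof.
move=> HK; elim: n F => [|n IH] F HF.
  by rewrite mul0n expr1 big_ord0; case: HK.
rewrite big_ord_recr /= mulSn -addnS addnC; apply: binom_ideal => //.
exact: IH.
Qed.

Lemma prime_avoid (R : comNzRingType) (I Sm : R -> Prop) :
  is_ideal I -> Sm 1 -> (forall a b, Sm a -> Sm b -> Sm (a * b)) ->
  (forall a, Sm a -> ~ I a) ->
  exists Q, [/\ prime_ideal Q, subI I Q & forall a, Sm a -> ~ Q a].
Proof.
move=> HI S1 SM SI.
have [C HC Ctot [X0 CX0]|M [[HM IM MS] _ Mmax]] := @zorn_gen (R -> Prop) (@subI R)
  (fun X => [/\ is_ideal X, subI I X & forall a, Sm a -> ~ X a]) I
  (fun u r h => h) (fun u v w h1 h2 r hr => h2 r (h1 r hr))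
  (And3 HI (fun r h => h) SI).
  exists (fun t => exists X, C X /\ X t); last by move=> X CX r Xr; exists X.
  split.
  - split; first by exists X0; split => //; have [[]] := HC X0 CX0.
    split.
      move=> a b [X [CX Xa]] [Y [CY Yb]].
      case: (Ctot X Y CX CY) => sub.
        exists Y; split => //; have [[_ [D _]] _ _] := HC Y CY; exact: D (sub a Xa) Yb.
      exists X; split => //; have [[_ [D _]] _ _] := HC X CX; exact: D Xa (sub b Yb).
    move=> r a [X [CX Xa]]; exists X; split => //.
    by have [[_ [_ Mu]] _ _] := HC X CX; apply: Mu.
  - by move=> r Ir; exists X0; split => //; have [_ IX _] := HC X0 CX0; apply: IX.
  - by move=> a Sa [X [CX Xa]]; have [_ _ D] := HC X CX; exact: D a Sa Xa.
exists M; split => //.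
have [M0 [MD MMul]] := HM.
have ext : forall c, ~ M c -> exists s1 m r, [/\ Sm s1, M m & s1 = m + r * c].
  move=> c Mc; apply: NNPP => hno.
  pose Mc' := fun t => exists m r, M m /\ t = m + r * c.
  have Q' : [/\ is_ideal Mc', subI I Mc' & forall a, Sm a -> ~ Mc' a].
    split.
    - split; first by exists 0, 0; split => //; ring.
      split.
        move=> a b [m1 [r1 [H1 ->]]] [m2 [r2 [H2 ->]]].
        by exists (m1 + m2), (r1 + r2); split; [apply: MD|ring].
      move=> r' a [m1 [r1 [H1 ->]]].
      by exists (r' * m1), (r' * r1); split; [apply: MMul|ring].
    - by move=> r Ir; exists r, 0; split; [apply: IM|ring].
    - move=> a Sa [m [r [Mm ea]]]; apply: hno; exists a, m, r; split => //.
  have sub : subI M Mc' by move=> r Mr; exists r, 0; split => //; ring.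
  apply: Mc; apply: (Mmax _ Q' sub); exists 0, 1; split => //; ring.
split => //; split.
  by move=> M1; apply: MS S1 M1.
move=> a b Mab; apply: NNPP => /not_or_and [Ma Mb].
have [s1 [m1 [r1 [S1' Mm1 e1]]]] := ext a Ma.
have [s2 [m2 [r2 [S2' Mm2 e2]]]] := ext b Mb.
apply: (MS (s1 * s2)); first exact: SM.
have -> : s1 * s2 = m1 * s2 + (r1 * m2 * a + r1 * r2 * (a * b)) by rewrite e1 e2; ring.
apply: (MD); first exact: ideal_mulr.
apply: (MD); last exact: (MMul).
by rewrite mulrC; apply: (MMul); apply: (MMul).
Qed.

Lemma min_prime (R : comNzRingType) (J Q0 : R -> Prop) :
  prime_ideal Q0 -> subI J Q0 -> exists P, minimal_prime_over J P /\ subI P Q0.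
Proof.
move=> PQ0 JQ0.
have [C HC Ctot [X0 CX0]|M [[PM JM] MQ0 Mmax]] := @zorn_gen (R -> Prop) (fun X Y => subI Y X)
  (fun X => prime_ideal X /\ subI J X) Q0
  (fun u r h => h) (fun u v w h1 h2 r hr => h1 r (h2 r hr))
  (conj PQ0 JQ0).
  exists (fun t => forall X, C X -> X t); last by move=> X CX r Br; apply: Br.
  split; last by move=> r Jr X CX; have [_ JX] := HC X CX; apply: JX.
  split.
    split; first by move=> X CX; have [[[]]] := HC X CX.
    split.
      move=> a b Ba Bb X CX; have [[[_ [D _]] _] _] := HC X CX; exact: D _ _ (Ba X CX) (Bb X CX).
    move=> r a Ba X CX; have [[[_ [_ Mu]] _] _] := HC X CX; exact: Mu _ _ (Ba X CX).
  split; first by move=> B1; have [[_ [N1 _]] _] := HC X0 CX0; exact: N1 (B1 X0 CX0).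
  move=> a b Bab; case: (classic (forall X, C X -> X a)) => [|na]; first by left.
  right => X2 CX2; apply: NNPP => nb.
  have [X1 hX1] := not_all_ex_not _ _ na.
  have [CX1 nX1a] := imply_to_and _ _ hX1.
  have [[_ [_ P1]] _] := HC X1 CX1; have [[_ [_ P2]] _] := HC X2 CX2.
  case: (Ctot X1 X2 CX1 CX2) => sub.
    by case: (P2 a b (Bab X2 CX2)) => // /sub.
  by case: (P1 a b (Bab X1 CX1)) => // /sub.
exists M; split => //; split => // N PN JN NM; exact: Mmax.
Qed.

Lemma cech_core (R : comNzRingType) (i : nat) (x : 'I_i.+1 -> R) (s' : R) (n k : nat)
  (c : nat -> R) :
  s' * x ord_max ^+ n = \sum_(j < i) c j * x (widen_ord (leqnSn i) j) ->
  forall a, cech_top_zero x (s' ^+ (i * k).+1 * a) k.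
Proof.
move=> hs a.
pose xw := fun j : 'I_i => x (widen_ord (leqnSn i) j).
pose xi := x ord_max.
pose m := (i * k).+1.
pose K := fun v : R => exists d : nat -> R, v = \sum_(j < i) d j * xw j ^+ k.
have HK : is_ideal K.
  split; first by exists (fun _ => 0); rewrite big1 // => j _; rewrite mul0r.
  split.
    move=> u v [c1 ->] [d1 ->]; exists (fun j => c1 j + d1 j).
    by rewrite -big_split /=; apply: eq_bigr => j _; rewrite mulrDl.
  move=> r u [c1 ->]; exists (fun j => r * c1 j).
  by rewrite mulr_sumr; apply: eq_bigr => j _; rewrite mulrA.
have [d hd] : K ((s' * xi ^+ n) ^+ m).
  rewrite /xi hs /m; apply: sum_pow_ideal => // j.
  exists (fun l => if l == val j then c j ^+ k else 0).
  rewrite (bigD1 j) //= eqxx big1 ?addr0 ?exprMn // => l /negP nl.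
  by case: eqP => [el|_]; [case: nl; apply/eqP/val_inj|rewrite mul0r].
rewrite exprMn -exprM in hd.
pose y' := \prod_(j < i) xw j.
have ey : \prod_(j < i.+1) x j = y' * xi by rewrite big_ord_recr.
pose rr := fun j : nat => \prod_(l < i | val l != j) xw l.
have eyj : forall j : 'I_i, y' = xw j * rr j.
  by move=> j; rewrite /y' (bigD1 j) //=.
pose E := (n * m + k)%N.
exists E, (fun j : 'I_i.+1 => if (j < i)%N then a * d j * rr j ^+ (n * m) else 0).
exists 0%N; rewrite expr0 mul1r; apply/eqP; rewrite subr_eq0; apply/eqP.
have -> : (\prod_(j < i.+1) x j) ^+ E =
   (y' ^+ (n * m) * xi ^+ (n * m)) * (\prod_(j < i.+1) x j) ^+ k.
  by rewrite /E exprD ey !exprMn.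
rewrite [\sum_(j < i.+1) _]big_ord_recr /= ltnn mul0r addr0 mulr_suml.
have -> : s' ^+ (i * k).+1 * a * (y' ^+ (n * m) * xi ^+ (n * m) *
        (\prod_(j < i.+1) x j) ^+ k) =
   a * (s' ^+ m * xi ^+ (n * m)) * y' ^+ (n * m) * (\prod_(j < i.+1) x j) ^+ k.
  by rewrite /m; ring.
rewrite hd !mulr_sumr !mulr_suml; apply: eq_bigr => j _.
rewrite ltn_ord (eyj j) /E exprD exprMn /xw; ring.
Qed.

Lemma prime_pow (R : comNzRingType) (P : R -> Prop) s m :
  prime_ideal P -> ~ P s -> ~ P (s ^+ m).
Proof.
move=> [_ [P1 Pm]] Ps; elim: m => [|m IH]; first by rewrite expr0.
by rewrite exprS => /Pm [].
Qed.

Lemma cech_core' (R : comNzRingType) (i l : nat) (e : l = i.+1) (x : 'I_l -> R)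
  (g : nat -> R) (s' : R) (n k : nat) (c : nat -> R) :
  (forall j : 'I_l, x j = g j) ->
  s' * g i ^+ n = \sum_(j < i) c j * g j ->
  forall a, cech_top_zero x (s' ^+ (i * k).+1 * a) k.
Proof.
subst l => hx hs; apply: (@cech_core _ _ _ _ _ _ c).
transitivity (s' * g i ^+ n); first by rewrite hx.
by rewrite hs; apply: eq_bigr => j _; rewrite hx.
Qed.

Theorem proposition4p10 (R : comNzRingType) :
  (forall s : seq R, strong_parameter_seq s -> unmixed (ideal_gen s)) ->
  cohen_macaulay R.
Proof.
move=> H s Hs; split; last first.
  case: s Hs => [|x0 s0] Hs.
    by move=> [c]; rewrite big_ord0 => /eqP; rewrite oner_eq0.
  have hsz : (0 < size (x0 :: s0) <= size (x0 :: s0))%N by rewrite leqnn.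
  by have := Hs _ hsz; rewrite take_size => -[].
move=> i lti r Hr; apply: NNPP => Hnr.
pose I := ideal_gen (take i s).
have HI : is_ideal I := ideal_gen_ideal _.
have szi : size (take i s) = i := size_takel (ltnW lti).
have unm : unmixed I.
  apply: H => j /andP[j0 jle]; rewrite szi in jle.
  rewrite take_takel //; apply: Hs; rewrite j0 /=.
  exact: leq_trans jle (ltnW lti).
pose x := s`_i.
pose J := ann_quot I r.
have [I0 [ID IM]] := HI.
have HJ : is_ideal J.
  split; first by rewrite /J /ann_quot mul0r.
  split; first by move=> u v Ju Jv; rewrite /J /ann_quot mulrDl; apply: ID.
  by move=> u v Jv; rewrite /J /ann_quot -mulrA; apply: IM.
have J1 : ~ J 1 by rewrite /J /ann_quot mul1r.
have Jx : J x by rewrite /J /ann_quot mulrC.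
have [Q0 [PQ0 JQ0 _]] : exists Q, [/\ prime_ideal Q, subI J Q & forall a, a = 1 -> ~ Q a].
  apply: prime_avoid => //; first by move=> u v -> ->; rewrite mulr1.
  by move=> u ->.
have [P [MP _]] := min_prime PQ0 JQ0.
have wP : wAss_quot I P by exists r.
have [[PP _] Pmin] := (unm P).1 wP.
have [_ JP _] := MP.
have IJ : subI I J by move=> u Iu; rewrite /J /ann_quot; exact: ideal_mulr.
have IP : subI I P by move=> u Iu; apply: JP; apply: IJ.
have xP : P x := JP x Jx.
have [P0 [PD PM]] := PP.1.
have [P1 Pprime] := PP.2.
have [s' [n0 [nPs' Is']]] : exists s' n, ~ P s' /\ I (s' * x ^+ n).
  apply: NNPP => hno.
  pose Sm := fun a => exists s1 n1, ~ P s1 /\ a = s1 * x ^+ n1.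
  have [Q [PQ IQ SQ]] : exists Q, [/\ prime_ideal Q, subI I Q & forall a, Sm a -> ~ Q a].
    apply: prime_avoid => //.
    - by exists 1, 0%N; split => //; rewrite expr0 mulr1.
    - move=> u v [s1 [n1 [h1 ->]]] [s2 [n2 [h2 ->]]].
      exists (s1 * s2), (n1 + n2)%N; split; last by rewrite exprD; ring.
      by move=> /Pprime [].
    - by move=> u [s1 [n1 [h1 ->]]] Iu; apply: hno; exists s1, n1.
  have supQ : supp_quot I Q.
    split => //; exists 1 => t nQ It; apply: nQ; apply: IQ; by rewrite mulr1 in It.
  have QP : subI Q P.
    move=> t Qt; apply: NNPP => nPt; apply: (SQ t) Qt; exists t, 0%N.
    by rewrite expr0 mulr1.
  have PQ' := Pmin Q supQ QP.
  by apply: (SQ x) (PQ' x xP); exists 1, 1%N; rewrite mul1r expr1.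
have Pgen : subI (ideal_gen (take i.+1 s)) P.
  apply: ideal_gen_sub => // j hj; rewrite size_takel // in hj.
  rewrite nth_take //.
  case: (ltnP j i) => ji.
    by apply: IP; rewrite -(nth_take _ ji); apply: ideal_gen_mem; rewrite szi.
  have -> : j = i by apply/eqP; rewrite eqn_leq ji -ltnS hj.
  exact: xP.
have hsz : (0 < i.+1 <= size s)%N by rewrite lti.
have [_ _ hc] := Hs i.+1 hsz.
have [a [k hak]] := hc P PP Pgen.
have [c hc'] := ideal_gen_nat Is'.
rewrite szi in hc'.
apply: (hak (s' ^+ (i * k).+1)); first exact: prime_pow.
apply: (@cech_core' R i _ (size_takel lti) _ (fun j => s`_j) s' n0 k c).
  move=> j; rewrite /seqfun nth_take //.
  by apply: leq_trans (ltn_ord j) _; rewrite size_takel.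
rewrite hc'; apply: eq_bigr => j _; rewrite nth_take //.
Qed.
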